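(* Let $\mathcal A$ be a unital $C^*$-algebra, $a\in\mathcal A$, and $p,q\in\mathcal A$ projections such that $a$ is invertible up to $(p,q)$, with $(p,q)$-inverse $b$. Let $r_1,r_2,s_1,s_2\in\mathcal A$ be projections with $1-p=r_1+r_2$ and $1-q=s_1+s_2$. If $a$ is invertible up to $(1-r_1,1-s_1)$ and either $\|s_2ar_1\|<\|b\|^{-1}$ or $\|s_1ar_2\|<\|b\|^{-1}$, then $a$ is invertible up to $(1-r_2,1-s_2)$.
   Context: For $a\in\mathcal A$ and projections $p,q$ in a unital $C^*$-algebra $\mathcal A$, $a$ is invertible up to $(p,q)$ if there is $b\in\mathcal A$ with $b=(1-p)b(1-q)$, $(1-q)a(1-p)b=1-q$ and $b(1-q)a(1-p)=1-p$; $b$ is called the $(p,q)$-inverse of $a$. *)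

(* Defs.v *)
From mathcomp Require Import all_boot all_algebra.
From mathcomp Require Import all_classical all_reals all_analysis.
From mathcomp.real_closed Require Import complex.
Import numFieldNormedType.Exports.
Import GRing.Theory Num.Theory.
Local Open Scope ring_scope.
Local Open Scope complex_scope.

Set Implicit Arguments. Unset Strict Implicit. Unset Printing Implicit Defensive.

Record CStarAlg (R : realType) (A : completeNormedModType R[i]) := {
  cmul : A -> A -> A;
  cone : A;
  cstar : A -> A;
  cmulA : forall x y z, cmul x (cmul y z) = cmul (cmul x y) z;
  cmul1l : forall x, cmul cone x = x;
  cmul1r : forall x, cmul x cone = x;
  cmulDl : forall x y z, cmul (x + y) z = cmul x z + cmul y z;
  cmulDr : forall x y z, cmul x (y + z) = cmul x y + cmul x z;
  cmulZl : forall (k : R[i]) x y, cmul (k *: x) y = k *: cmul x y;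
  cmulZr : forall (k : R[i]) x y, cmul x (k *: y) = k *: cmul x y;
  cnorm_mul : forall x y, `|cmul x y| <= `|x| * `|y|;
  cstarD : forall x y, cstar (x + y) = cstar x + cstar y;
  cstarZ : forall (k : R[i]) x, cstar (k *: x) = k^* *: cstar x;
  cstarK : forall x, cstar (cstar x) = x;
  cstarM : forall x y, cstar (cmul x y) = cmul (cstar y) (cstar x);
  cstar_id : forall x, `|cmul (cstar x) x| = `|x| ^+ 2
}.

Section PQInverse.
Variables (R : realType) (A : completeNormedModType R[i]) (C : CStarAlg A).
Local Notation "x ** y" := (cmul C x y) (at level 40, left associativity).
Local Notation e := (cone C).

Definition is_projection (p : A) : Prop := cstar C p = p /\ p ** p = p.

Definition pq_inverse (p q a b : A) : Prop :=
  [/\ b = (e - p) ** b ** (e - q),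
      (e - q) ** a ** (e - p) ** b = e - q
    & b ** (e - q) ** a ** (e - p) = e - p].

Definition invertible_upto (p q a : A) : Prop := exists b, pq_inverse p q a b.
End PQInverse.

(* Main.v *)
Require Import Defs.
From HB Require Import structures.
From mathcomp Require Import all_boot all_algebra.
From mathcomp Require Import all_classical all_reals all_analysis.
From mathcomp.real_closed Require Import complex.
Import numFieldNormedType.Exports.
Import order.Order.TTheory GRing.Theory Num.Theory.
Local Open Scope classical_set_scope.
Local Open Scope ring_scope.

Lemma geo_small (R : realType) (t e : R[i]) : 0 <= t -> t < 1 -> 0 < e ->
  \forall n \near \oo, t ^+ n < e.
Proof.
move=> t0 t1 e0.
have /complex_realP [x xt] := ger0_real t0.
have /complex_realP [y ye] := gtr0_real e0.
move: t0 t1 e0; rewrite xt ye ler0c -[1]/((1%:C)%C) ltcR => x0 x1.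
rewrite -[0]/((0%:C)%C) ltcR => y0.
have : `|x| < 1 by rewrite ger0_norm.
move=> /(@cvg_geometric _ 1) /cvgrPdist_lt /(_ _ y0).
apply: filterS => n /=; rewrite sub0r normrN mul1r ger0_norm ?exprn_ge0 //.
by rewrite -rmorphXn /= ltcR.
Qed.

Lemma small_mul (R : realType) (c : R[i]) (d : nat -> R[i]) : 0 <= c ->
  (forall n, 0 <= d n) ->
  (forall e, 0 < e -> \forall n \near \oo, d n < e) ->
  forall e, 0 < e -> \forall n \near \oo, c * d n < e.
Proof.
move=> c0 d0 H e e0.
have c1 : 0 < c + 1 by rewrite ltr_wpDl.
apply: filterS (H (e / (c + 1)) (divr_gt0 e0 c1)) => n.
rewrite ltr_pdivlMr // => h; apply: le_lt_trans h.
by rewrite mulrC ler_wpM2l // lerDl.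
Qed.

Lemma zero_of_bound (R : realType) (A : normedModType R[i]) (x : A)
  (a b : nat -> R[i]) : (forall n, `|x| <= a n + b n) ->
  (forall e, 0 < e -> \forall n \near \oo, a n < e) ->
  (forall e, 0 < e -> \forall n \near \oo, b n < e) -> x = 0.
Proof.
move=> hx ha hb; apply/eqP; apply: contraT => x0.
have e0 : 0 < `|x| / 2 by rewrite divr_gt0 // normr_gt0.
have [n [h1 h2]] : exists n, a n < `|x| / 2 /\ b n < `|x| / 2.
  have [N1 _ H1] := ha _ e0; have [N2 _ H2] := hb _ e0.
  exists (maxn N1 N2); split; [apply: H1 | apply: H2] => /=;
  by rewrite ?leq_maxl ?leq_maxr.
have := le_lt_trans (hx n) (ltrD h1 h2).
by rewrite -splitr ltxx.
Qed.

Section Alg.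
Variables (R : realType) (A : completeNormedModType R[i]) (C : CStarAlg A).
Definition AR_ (_ : CStarAlg A) : Type := A.
Local Notation AR := (AR_ C).
HB.instance Definition _ := GRing.Zmodule.on AR.
HB.instance Definition _ := GRing.Zmodule_isPzRing.Build AR
  (cmulA C) (cmul1l C) (cmul1r C) (cmulDl C) (cmulDr C).

Lemma cnormM (x y : AR) : `|(x * y : AR) : A| <= `|x : A| * `|y : A|.
Proof. exact: (cnorm_mul C x y). Qed.

Lemma telL (T : AR) n : (1 - T) * (series (fun k => (T ^+ k : A)) n : AR) = 1 - T ^+ n.
Proof.
elim: n => [|n IH]; first by rewrite /series /= big_geq // mulr0 expr0 subrr.
rewrite /series /= big_nat_recr //= mulrDr.
rewrite /series /= in IH; rewrite IH mulrBl mul1r -exprS.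
by rewrite addrA subrK.
Qed.

Lemma telR (T : AR) n : (series (fun k => (T ^+ k : A)) n : AR) * (1 - T) = 1 - T ^+ n.
Proof.
elim: n => [|n IH]; first by rewrite /series /= big_geq // mul0r expr0 subrr.
rewrite /series /= big_nat_recr //= mulrDl.
rewrite /series /= in IH; rewrite IH mulrBr mulr1 -exprSr.
by rewrite addrA subrK.
Qed.


Lemma powb (T : AR) k : `|T ^+ k : A| <= `|(1 : AR) : A| * `|T : A| ^+ k.
Proof.
elim: k => [|k IH]; first by rewrite !expr0 mulr1.
rewrite exprS (le_trans (cnormM _ _)) // exprS mulrCA ler_wpM2l //.
Qed.

Lemma sumb (T : AR) (t1 : `|T : A| < 1) m n :
  `|\sum_(m <= k < n) (T ^+ k : A)| <=
    (`|(1 : AR) : A| + 1) / (1 - `|T : A|) * `|T : A| ^+ m.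
Proof.
set t := `|T : A|.
have t0 : 0 <= t := normr_ge0 _.
have d0 : 0 < 1 - t by rewrite subr_gt0.
case: (leqP n m) => [nm | mn].
  rewrite big_geq // normr0 mulr_ge0 ?exprn_ge0 // divr_ge0 ?(ltW d0) //.
rewrite (le_trans (ler_norm_sum _ _ _)) //.
rewrite (@le_trans _ _ (\sum_(m <= k < n) `|(1 : AR) : A| * t ^+ k)) //.
  by apply: ler_sum => k _; exact: powb.
rewrite -mulr_sumr.
rewrite -(subnKC (ltnW mn)) geometric_partial_tail geometric_seriesE; last first.
  by rewrite lt_eqF.
rewrite /=.
set j := (n - m)%N.
have -> : `|(1 : AR) : A| * (t ^+ m * (1 - t ^+ j) / (1 - t)) =
   (`|(1 : AR) : A| * (1 - t ^+ j)) * (t ^+ m / (1 - t)) by rewrite !mulrA; congr (_ * _); rewrite -!mulrA [_ * t ^+ m]mulrC.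
rewrite [X in _ <= X]mulrAC -[X in _ <= X]mulrA.
rewrite ler_wpM2r // ?divr_ge0 ?exprn_ge0 ?(ltW d0) //.
rewrite (@le_trans _ _ (`|(1 : AR) : A| * 1)) //.
  by rewrite ler_wpM2l // gerBl exprn_ge0.
by rewrite mulr1 lerDl.
Qed.


Lemma neumann (T : AR) : `|T : A| < 1 ->
  exists u : AR, (1 - T) * u = 1 /\ u * (1 - T) = 1.
Proof.
move=> t1; set t := `|T : A|.
have t0 : 0 <= t := normr_ge0 _.
have d0 : 0 < 1 - t by rewrite subr_gt0.
have K0 : 0 < (`|(1 : AR) : A| + 1) / (1 - t).
  by rewrite divr_gt0 // ltr_wpDl.
set f := fun k => (T ^+ k : A).
have cf : cvgn (series f).
  apply/cauchy_cvgP/cauchy_seriesP => e e0.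
  have [N _ HN] := @geo_small R t _ t0 t1 (divr_gt0 e0 K0).
  exists ([set k | (N <= k)%N], setT) => /=; first by split => //; exists N.
  move=> [p q] /= [hp _]; apply: le_lt_trans (@sumb T t1 p q) _.
  by rewrite mulrC -ltr_pdivlMr //; exact: HN.
set u := limn (series f).
have c1 : forall e, 0 < e -> \forall n \near \oo, `|u - series f n| < e.
  by move=> e e0; move: cf => /cvgrPdist_lt /(_ _ e0).
have c2 := @small_mul R _ _ (normr_ge0 ((1 : AR) : A)) (fun n => exprn_ge0 n t0)
              (fun e => @geo_small R t e t0 t1).
exists u; split; apply/eqP; rewrite -subr_eq0; apply/eqP.
  apply: (@zero_of_bound _ _ _ (fun n => `|(1 - T : AR) : A| * `|u - series f n|)
    (fun n => `|(1 : AR) : A| * t ^+ n)).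
  - move=> n.
    have -> : (1 - T) * (u : AR) - 1 = ((1 - T) * ((u : AR) - series f n) - T ^+ n : AR).
      by rewrite mulrBr telL opprB addrAC -addrA addKr.
    apply: le_trans (ler_normB _ _) _.
    by apply: lerD; [exact: cnormM | exact: powb].
  - exact: @small_mul R _ _ (normr_ge0 _) (fun n => normr_ge0 _) c1.
  - exact: c2.
apply: (@zero_of_bound _ _ _ (fun n => `|u - series f n| * `|(1 - T : AR) : A|)
    (fun n => `|(1 : AR) : A| * t ^+ n)).
- move=> n.
  have -> : (u : AR) * (1 - T) - 1 = (((u : AR) - series f n) * (1 - T) - T ^+ n : AR).
    by rewrite mulrBl telR opprB addrAC -addrA addKr.
  apply: le_trans (ler_normB _ _) _.
  by apply: lerD; [exact: cnormM | exact: powb].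
- move=> e e0.
  have := @small_mul R _ (fun n => `|u - series f n|) (normr_ge0 ((1 - T : AR) : A))
     (fun n => normr_ge0 _) c1 e e0.
  by apply: filterS => n; rewrite mulrC.
- exact: c2.
Qed.


Lemma orth (x y : AR) : x * x = x -> y * y = y -> (x + y) * (x + y) = x + y ->
  x * y = 0.
Proof.
move=> hx hy; rewrite mulrDl !mulrDr hx hy [y * x + y]addrC addrACA.
rewrite -[X in _ = X]addr0 => /addrI h1.
have h2 : x * y = - (x * y * x).
  apply/eqP; rewrite -addr_eq0.
  by rewrite -{1}hx -mulrA -[x * y * x]mulrA -mulrDr h1 mulr0.
have h3 : y * x = - (x * y * x).
  apply/eqP; rewrite -addr_eq0 addrC.
  by rewrite -{3}hx mulrA -mulrDl h1 mul0r.
have h4 : (x * y : AR) *+ 2 = 0.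
  by rewrite mulr2n {2}h2 -h3 h1.
have : (2%:R : R[i]) *: ((x * y : AR) : A) == 0 by rewrite scaler_nat; apply/eqP.
by rewrite scaler_eq0 pnatr_eq0 /= => /eqP.
Qed.


Lemma core (a P Q b X u : AR) :
  P * P = P -> Q * Q = Q ->
  b = P * b * Q -> Q * a * P * b = Q -> b * Q * a * P = P ->
  Q * X = X -> X * P = X ->
  (1 - b * X) * u = 1 -> u * (1 - b * X) = 1 ->
  exists N, N * (Q * a * P - X) = P /\ (Q * a * P - X) * N = Q.
Proof.
move=> hP hQ hb hQaPb hbQaP hQX hXP hu1 hu2.
have hPb : P * b = b by rewrite {1}hb !mulrA hP -hb.
have e1 : P - b * X = P * (1 - b * X) by rewrite mulrBr mulr1 mulrA hPb.
have e2 : P - b * X = (1 - b * X) * P by rewrite mulrBl mul1r -mulrA hXP.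
have hPu : P * u = u * P.
  transitivity (u * (P * (1 - b * X)) * u).
    by rewrite -e1 e2 !mulrA hu2 mul1r.
  by rewrite !mulrA -[u * P * (1 - b * X) * u]mulrA hu1 mulr1.
have hv : P * u * (P - b * X) = P.
  by rewrite e2 mulrA -(mulrA P u) hu2 mulr1 hP.
have hv' : (P - b * X) * (P * u) = P.
  by rewrite e2 -mulrA [P * (P * u)]mulrA hP hPu mulrA hu1 mul1r.
have hbM : b * (Q * a * P - X) = P - b * X by rewrite mulrBr !mulrA hbQaP.
have hM : Q * a * P - X = Q * a * P * (P - b * X).
  by rewrite mulrBr -[Q * a * P * P]mulrA hP [Q * a * P * (b * X)]mulrA hQaPb hQX.
exists (P * u * b); split.
  by rewrite -mulrA hbM hv.
by rewrite hM -mulrA [(P - b * X) * _]mulrA hv' hPb hQaPb.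
Qed.


Lemma idemC (x : AR) : x * x = x -> (1 - x) * (1 - x) = 1 - x.
Proof. by move=> hx; rewrite mulrBl mul1r mulrBr mulr1 hx subrr subr0. Qed.

Lemma main_alg (a p q b r1 r2 s1 s2 c : AR) :
  p * p = p -> q * q = q ->
  (1 - q) * a * (1 - p) * b = 1 - q -> b * (1 - q) * a * (1 - p) = 1 - p ->
  b = (1 - p) * b * (1 - q) ->
  r1 * r1 = r1 -> r2 * r2 = r2 -> s1 * s1 = s1 -> s2 * s2 = s2 ->
  1 - p = r1 + r2 -> 1 - q = s1 + s2 ->
  (1 - (1 - s1)) * a * (1 - (1 - r1)) * c = 1 - (1 - s1) ->
  c * (1 - (1 - s1)) * a * (1 - (1 - r1)) = 1 - (1 - r1) ->
  (exists u, (1 - b * (s2 * a * r1)) * u = 1 /\ u * (1 - b * (s2 * a * r1)) = 1) \/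
  (exists u, (1 - b * (s1 * a * r2)) * u = 1 /\ u * (1 - b * (s1 * a * r2)) = 1) ->
  exists d, [/\ d = (1 - (1 - r2)) * d * (1 - (1 - s2)),
    (1 - (1 - s2)) * a * (1 - (1 - r2)) * d = 1 - (1 - s2)
  & d * (1 - (1 - s2)) * a * (1 - (1 - r2)) = 1 - (1 - r2)].
Proof.
rewrite !subKr.
move=> hp hq hQaPb hbQaP hb hr1 hr2 hs1 hs2 hPr hQs hc2 hc3 hu.
have hP := @idemC p hp; have hQ := @idemC q hq.
have r12 : r1 * r2 = 0 by apply: orth => //; rewrite -hPr.
have r21 : r2 * r1 = 0 by apply: orth => //; rewrite addrC -hPr.
have s12 : s1 * s2 = 0 by apply: orth => //; rewrite -hQs.
have s21 : s2 * s1 = 0 by apply: orth => //; rewrite addrC -hQs.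
have hPr1 : (1 - p) * r1 = r1 by rewrite hPr mulrDl hr1 r21 addr0.
have hPr2 : (1 - p) * r2 = r2 by rewrite hPr mulrDl hr2 r12 add0r.
have hr1P : r1 * (1 - p) = r1 by rewrite hPr mulrDr hr1 r12 addr0.
have hr2P : r2 * (1 - p) = r2 by rewrite hPr mulrDr hr2 r21 add0r.
have hQs1 : (1 - q) * s1 = s1 by rewrite hQs mulrDl hs1 s21 addr0.
have hQs2 : (1 - q) * s2 = s2 by rewrite hQs mulrDl hs2 s12 add0r.
have hs1Q : s1 * (1 - q) = s1 by rewrite hQs mulrDr hs1 s12 addr0.
have hs2Q : s2 * (1 - q) = s2 by rewrite hQs mulrDr hs2 s21 add0r.
have hd1 : forall N, r2 * N * s2 = r2 * (r2 * N * s2) * s2.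
  by move=> N; rewrite !mulrA hr2 -[r2 * N * s2 * s2]mulrA hs2.
case: hu => [[u [hu1 hu2]] | [u [hu1 hu2]]].
- have hX1 : (1 - q) * (s2 * a * r1) = s2 * a * r1 by rewrite !mulrA hQs2.
  have hX2 : s2 * a * r1 * (1 - p) = s2 * a * r1 by rewrite -mulrA hr1P.
  have [N [hN1 hN2]] := @core _ _ _ _ _ _ hP hQ hb hQaPb hbQaP hX1 hX2 hu1 hu2.
  exists (r2 * N * s2); split => //.
  + have hs2M : s2 * ((1 - q) * a * (1 - p) - s2 * a * r1) = s2 * a * r2.
      rewrite mulrBr !mulrA hs2Q hs2 -mulrBr hPr addrC addKr //.
    rewrite !mulrA -[s2 * a * r2 * r2]mulrA hr2.
    by rewrite -hs2M -(mulrA s2 _ N) hN2 hs2Q hs2.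
  + have hMr1 : ((1 - q) * a * (1 - p) - s2 * a * r1) * r1 = s1 * a * r1.
      rewrite mulrBl -!mulrA hPr1 hr1 hQs mulrDl addrK.
      by rewrite mulrA.
    have hNs1 : N * s1 = r1 * c.
      have h : N * (s1 * a * r1) = r1 by rewrite -hMr1 mulrA hN1 hPr1.
      by rewrite -{1}hc2 mulrA h.
    have hr2Ns1 : r2 * N * s1 = 0 by rewrite -mulrA hNs1 mulrA r21 mul0r.
    have hMr2 : ((1 - q) * a * (1 - p) - s2 * a * r1) * r2 = s1 * a * r2 + s2 * a * r2.
      by rewrite mulrBl -!mulrA hPr2 r12 !mulr0 subr0 hQs mulrDl !mulrA.
    have h3 : r2 * N * s1 * a * r2 + r2 * N * s2 * a * r2 = r2.
      have h : r2 * (N * (((1 - q) * a * (1 - p) - s2 * a * r1) * r2)) = r2.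
        by rewrite [N * (_ * r2)]mulrA hN1 hPr2 hr2.
      by rewrite hMr2 mulrDr mulrDr !mulrA in h.
    apply: etrans h3.
    by rewrite hr2Ns1 !mul0r add0r -[r2 * N * s2 * s2]mulrA hs2.
- have hX1 : (1 - q) * (s1 * a * r2) = s1 * a * r2 by rewrite !mulrA hQs1.
  have hX2 : s1 * a * r2 * (1 - p) = s1 * a * r2 by rewrite -mulrA hr2P.
  have [N [hN1 hN2]] := @core _ _ _ _ _ _ hP hQ hb hQaPb hbQaP hX1 hX2 hu1 hu2.
  exists (r2 * N * s2); split => //.
  + have hs1M : s1 * ((1 - q) * a * (1 - p) - s1 * a * r2) = s1 * a * r1.
      rewrite mulrBr !mulrA hs1Q hs1 -mulrBr hPr addrK //.
    have hr1N : r1 * N = c * s1.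
      have h : s1 * a * r1 * N = s1 by rewrite -hs1M -mulrA hN2 hs1Q.
      by rewrite -hc3 -!mulrA; congr (_ * _); rewrite !mulrA h.
    have hr1Ns2 : r1 * N * s2 = 0 by rewrite hr1N -mulrA s12 mulr0.
    have hs2M : s2 * ((1 - q) * a * (1 - p) - s1 * a * r2) = s2 * a * r1 + s2 * a * r2.
      by rewrite mulrBr !mulrA hs2Q s21 !mul0r subr0 hPr mulrDr.
    have h3 : s2 * a * r1 * N * s2 + s2 * a * r2 * N * s2 = s2.
      have h : s2 * ((1 - q) * a * (1 - p) - s1 * a * r2) * N * s2 = s2.
        by rewrite -(mulrA s2 _ N) hN2 hs2Q hs2.
      by rewrite hs2M mulrDl mulrDl in h.
    rewrite !mulrA -[s2 * a * r2 * r2]mulrA hr2.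
    apply: etrans h3.
    have z : s2 * a * r1 * N * s2 = 0 by rewrite -[s2 * a * r1 * N]mulrA -mulrA hr1Ns2 mulr0.
    by rewrite z add0r.
  + have hMr2 : ((1 - q) * a * (1 - p) - s1 * a * r2) * r2 = s2 * a * r2.
      rewrite mulrBl -!mulrA hPr2 hr2 hQs mulrDl addrC addKr.
      by rewrite mulrA.
    have h : N * (s2 * a * r2) = r2 by rewrite -hMr2 mulrA hN1 hPr2.
    rewrite -!mulrA in h; by rewrite -[r2 * N * s2 * s2]mulrA hs2 -!mulrA h hr2.
Qed.

End Alg.

Theorem mainTheorem10 (R : realType) (A : completeNormedModType R[i])
  (C : CStarAlg A) (a p q b r1 r2 s1 s2 : A) :
  is_projection C p -> is_projection C q ->
  pq_inverse C p q a b ->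
  is_projection C r1 -> is_projection C r2 ->
  is_projection C s1 -> is_projection C s2 ->
  cone C - p = r1 + r2 -> cone C - q = s1 + s2 ->
  invertible_upto C (cone C - r1) (cone C - s1) a ->
  (`|cmul C (cmul C s2 a) r1| * `|b| < 1 \/
   `|cmul C (cmul C s1 a) r2| * `|b| < 1) ->
  invertible_upto C (cone C - r2) (cone C - s2) a.
Proof.
move=> hp hq [hb hQaPb hbQaP] hr1 hr2 hs1 hs2 hPr hQs [c [hc1 hc2 hc3]] hn.
have hu : (exists u : @AR_ R A C, (1 - (b : @AR_ R A C) * ((s2 : @AR_ R A C) * a * r1)) * u = 1 /\
              u * (1 - (b : @AR_ R A C) * ((s2 : @AR_ R A C) * a * r1)) = 1) \/
          (exists u : @AR_ R A C, (1 - (b : @AR_ R A C) * ((s1 : @AR_ R A C) * a * r2)) * u = 1 /\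
              u * (1 - (b : @AR_ R A C) * ((s1 : @AR_ R A C) * a * r2)) = 1).
  case: hn => h; [left|right]; apply: neumann;
  (apply: le_lt_trans (cnorm_mul C _ _) _; by rewrite mulrC).
have [d hd] := @main_alg R A C a p q b r1 r2 s1 s2 c hp.2 hq.2 hQaPb hbQaP hb
  hr1.2 hr2.2 hs1.2 hs2.2 hPr hQs hc2 hc3 hu.
by exists d.
Qed.
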